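(* Let $|N|=n$, let $i\in N$ and $S\subset N\setminus\{i\}$, and let $\chi_{(S,S\cup\{i\})}\in\ell^2(E)$ be the indicator function equal to $1$ on the edge $(S,S\cup\{i\})$ and $0$ on all other edges. If $u\in\ell^2(V)$ satisfies $\mathrm{d}u = P\chi_{(S,S\cup\{i\})}$ and $u(\emptyset)=0$, then $$u(N)=\frac{|S|!\,(n-1-|S|)!}{n!}.$$
   Context: Let $N$ be a finite set of players. The hypercube graph $G=(V,E)$ has vertex set $V=2^N$ and oriented edge set $E=\{(S,S\cup\{i\}) : i\in N,\ S\subset N\setminus\{i\}\}$. $\ell^2(V)$ is the space of real functions on $V$, and $\ell^2(E)$ is the space of real functions on $E$ with inner product $\langle f,g\rangle=\sum_{e\in E}f(e)g(e)$. The operator $\mathrm{d}\colon \ell^2(V)\to\ell^2(E)$ is $\mathrm{d}u(S,S\cup\{i\}) = u(S\cup\{i\})-u(S)$, with range $\mathcal{R}(\mathrm{d})$. $P\colon\ell^2(E)\to\ell^2(E)$ is the orthogonal projection onto $\mathcal{R}(\mathrm{d})$. *)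

(* Defs.v *)
(* Players N = 'I_n, coalitions V = {set 'I_n}. *)
From HB Require Import structures.
From mathcomp Require Import all_boot all_order all_algebra.
Set Implicit Arguments. Unset Strict Implicit. Unset Printing Implicit Defensive.
Import Order.TTheory GRing.Theory Num.Theory.
Local Open Scope ring_scope.

(* Oriented edges of the hypercube: the edge (S, S ∪ {i}) is encoded by the
   pair (S, i) with i ∉ S. *)
Definition edge (n : nat) : finType :=
  {p : {set 'I_n} * 'I_n | p.2 \notin p.1}.

Definition dop (R : nzRingType) (n : nat) (u : {set 'I_n} -> R) : edge n -> R :=
  fun e => u ((val e).1 :|: [set (val e).2]) - u (val e).1.

Definition innerE (R : nzRingType) (n : nat) (f g : edge n -> R) : R :=
  \sum_(e : edge n) f e * g e.

(* Orthogonal projection P onto the range of d, given by its defining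
   property: g = P f  iff  g ∈ R(d) and f - g ⊥ R(d). *)
Definition is_proj_range_d (R : nzRingType) (n : nat) (f g : edge n -> R) : Prop :=
  (exists w : {set 'I_n} -> R, forall e, g e = dop w e) /\
  (forall w : {set 'I_n} -> R, innerE (fun e => f e - g e) (dop w) = 0).

Definition chi_edge (R : nzRingType) (n : nat) (S : {set 'I_n}) (i : 'I_n) : edge n -> R :=
  fun e => if val e == (S, i) then 1 else 0.

(* Main.v *)
Require Import Defs.
From HB Require Import structures.
From mathcomp Require Import all_boot all_order all_algebra.
From mathcomp Require Import zify ring.
Import Order.TTheory GRing.Theory Num.Theory.
Local Open Scope ring_scope.

Lemma sum_edge (R : nzRingType) n (F : {set 'I_n} * 'I_n -> R) :
  \sum_(e : edge n) F (val e) = \sum_(T : {set 'I_n}) \sum_(j : 'I_n | j \notin T) F (T, j).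
Proof.
rewrite pair_big_dep /=.
rewrite (reindex_omap (val : edge n -> _) insub); last first.
  by move=> p Pp; rewrite insubT.
symmetry; apply: eq_big => [[[T j] h]|[[T j] h] _] //=.
case: insubP => [y _ ey|]; last by rewrite h.
rewrite h /=; apply/eqP; congr Some; exact: val_inj.
Qed.

Lemma dcount (R : nzRingType) n (a : {set 'I_n} -> R) :
  \sum_(T : {set 'I_n}) \sum_(j : 'I_n | j \notin T) a (T :|: [set j]) * 1 =
  \sum_(U : {set 'I_n}) a U *+ #|U|.
Proof.
rewrite (eq_bigr (fun T : {set 'I_n} => \sum_(j : 'I_n) (if j \notin T then a (T :|: [set j]) * 1 else 0))); last by move=> T _; rewrite big_mkcond.
rewrite exchange_big /=.
transitivity (\sum_(j : 'I_n) \sum_(U : {set 'I_n} | j \in U) a U).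
  apply: eq_bigr => j _. rewrite -big_mkcond /=.
  rewrite [RHS](reindex_onto (fun T => T :|: [set j]) (fun U => U :\ j)); last first.
    by move=> U jU; rewrite setUC setD1K.
  symmetry; apply: eq_big => [T|T _]; last by rewrite mulr1.
  rewrite !inE eqxx orbT /=.
  apply/idP/idP.
  - by move/eqP=> h; rewrite -h !inE eqxx.
  - move=> jT; apply/eqP/setP => x; rewrite !inE.
    case: (x =P j) => [->|] //=; first by rewrite (negbTE jT).
    by rewrite orbF.
rewrite (eq_bigr (fun j : 'I_n => \sum_(U : {set 'I_n}) (if j \in U then a U else 0))); last by move=> j _; rewrite big_mkcond.
rewrite exchange_big /=; apply: eq_bigr => U _.
by rewrite -big_mkcond /= sumr_const.
Qed.

Lemma Gid n k : (0 < k < n)%N ->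
  ((k.-1)`! * (n-1-k.-1)`! * k = k`! * (n-1-k)`! * (n-k))%N.
Proof.
case: k => // k /andP[_ kn].
have -> : (n - 1 - k.+1.-1 = (n - k.+2).+1)%N by rewrite /=; lia.
have -> : (n - k.+1 = (n - k.+2).+1)%N by lia.
have -> : (n - 1 - k.+1 = (n - k.+2))%N by lia.
rewrite /= !factS; set m := (n - k.+2)%N.
ring.
Qed.

Theorem mainTheorem3 (R : realFieldType) (n : nat) (i : 'I_n) (S : {set 'I_n})
  (hiS : i \notin S) (u : {set 'I_n} -> R) :
  is_proj_range_d (chi_edge R S i) (dop u) ->
  u set0 = 0 ->
  u setT = ((#|S|`! * (n - 1 - #|S|)`!)%:R / (n`!)%:R).
Proof.
move=> [_ orth] u0.
have n0 : (0 < n)%N by apply: (leq_ltn_trans (leq0n i)); exact: ltn_ord.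
pose G := fun k : nat => ((k`! * (n - 1 - k)`!)%:R : R).
pose w := fun T : {set 'I_n} => \sum_(k < #|T|) G k.
have dw : forall e, dop w e = G #|(val e).1|.
  move=> [[T j] h] /=; rewrite /dop /w /= setUC cardsU1 h add1n big_ord_recr /=.
  by rewrite addrC addrK.
have := orth w; rewrite /innerE.
under eq_bigr do rewrite mulrBl.
rewrite sumrB => /eqP; rewrite subr_eq0 => /eqP E.
have L : \sum_e chi_edge R S i e * dop w e = G #|S|.
  pose e0 : edge n := exist _ (S, i) hiS.
  rewrite (bigD1 e0) //= big1 ?addr0.
    by rewrite /chi_edge /= eqxx mul1r dw.
  move=> e ne; rewrite /chi_edge; case: eqP => [h|]; last by rewrite mul0r.
  by exfalso; move/eqP: ne; apply; apply: val_inj.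
have M : \sum_e dop u e * dop w e =
   \sum_(T : {set 'I_n}) \sum_(j : 'I_n | j \notin T)
      (u (T :|: [set j]) - u T) * G #|T|.
  rewrite -(@sum_edge R n (fun p => (u (p.1 :|: [set p.2]) - u p.1) * G #|p.1|)).
  by apply: eq_bigr => e _; rewrite dw.
have P1 : \sum_(T : {set 'I_n}) \sum_(j : 'I_n | j \notin T) u (T :|: [set j]) * G #|T|
    = \sum_(U : {set 'I_n}) u U * G #|U|.-1 *+ #|U|.
  rewrite -(@dcount R n (fun U => u U * G #|U|.-1)).
  apply: eq_bigr => T _; apply: eq_bigr => j jT.
  by rewrite mulr1 setUC cardsU1 jT add1n.
have P2 : \sum_(T : {set 'I_n}) \sum_(j : 'I_n | j \notin T) u T * G #|T|
    = \sum_(U : {set 'I_n}) u U * G #|U| *+ (n - #|U|).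
  apply: eq_bigr => T _; rewrite sumr_const; congr (_ *+ _).
  transitivity #|~: T|; first by apply: eq_card => j; rewrite !inE.
  have h := cardsC T; rewrite card_ord in h; lia.
have M2 : \sum_e dop u e * dop w e =
    \sum_(U : {set 'I_n}) u U * (G #|U|.-1 *+ #|U| - G #|U| *+ (n - #|U|)).
  rewrite M.
  transitivity (\sum_(T : {set 'I_n}) \sum_(j : 'I_n | j \notin T) u (T :|: [set j]) * G #|T|
      - \sum_(T : {set 'I_n}) \sum_(j : 'I_n | j \notin T) u T * G #|T|).
    rewrite -sumrB; apply: eq_bigr => T _; rewrite -sumrB.
    by apply: eq_bigr => j _; rewrite mulrBl.
  rewrite P1 P2 -sumrB; apply: eq_bigr => U _.
  by rewrite mulrBr !mulrnAr.
have cval : forall k, (k <= n)%N ->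
    G k.-1 *+ k - G k *+ (n - k) = (k == n)%:R * (n`!)%:R - (k == 0%N)%:R * (n`!)%:R.
  move=> k kn; rewrite /G -[X in X - _]mulr_natr -[X in _ - X]mulr_natr -!natrM.
  have [n' en] : exists n', n = n'.+1 by exists n.-1; rewrite prednK.
  rewrite en in kn *.
  have [->|k0] := eqVneq k 0%N.
    by rewrite muln0 mul0n subn0 subn1 /= fact0 mul1n mul1n factS mulnC subn0.
  have [->|kn'] := eqVneq k n'.+1.
    by rewrite subnn muln0 mul0n subr0 subn1 /= subnn fact0 muln1 mul1n factS mulnC subr0.
  rewrite Gid ?subrr //.
  by rewrite lt0n k0 /= ltn_neqAle kn' kn.
have cardU : forall U : {set 'I_n}, (#|U| <= n)%N.
  by move=> U; have := max_card U; rewrite card_ord.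
have key : G #|S| = (u setT - u set0) * (n`!)%:R.
  rewrite -L E M2.
  transitivity (\sum_(U : {set 'I_n}) u U * ((U == setT)%:R * (n`!)%:R - (U == set0)%:R * (n`!)%:R)).
    apply: eq_bigr => U _; rewrite cval ?cardU // cards_eq0.
    have -> : (#|U| == n) = (U == setT).
      by rewrite eqEcard subsetT cardsT card_ord /= eqn_leq cardU.
    by [].
  rewrite mulrBl; under eq_bigr => U _ do rewrite mulrBr.
  rewrite sumrB (bigD1 setT) //= eqxx mul1r big1 ?addr0; last first.
    by move=> U /negbTE ->; rewrite mul0r mulr0.
  rewrite (bigD1 set0) //= eqxx mul1r big1 ?addr0 //.
  by move=> U /negbTE ->; rewrite mul0r mulr0.
rewrite u0 subr0 in key.
rewrite -/(G #|S|) key mulfK // pnatr_eq0 -lt0n; exact: fact_gt0.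
Qed.
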